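(* Let $n, m \ge 1$, let $\boldsymbol{y} \in \{0,1\}^n$ be a (true) binary label vector, and let $\boldsymbol{w}_1, \ldots, \boldsymbol{w}_m \in [0,1]^n$ be weak signals (non-abstaining, i.e. each labels all $n$ examples). For each $i$, let $\epsilon_i = \frac{1}{n}\left( (\mathbf{1} - 2\boldsymbol{w}_i)^\top \boldsymbol{y} + \boldsymbol{w}_i^\top \mathbf{1}\right)$ be the true expected error rate of $\boldsymbol{w}_i$ with respect to $\boldsymbol{y}$, and set $\boldsymbol{\epsilon} = (\epsilon_1, \ldots, \epsilon_m)^\top$. Let $\boldsymbol{A} \in \mathbb{R}^{m \times n}$ be the matrix whose $i$-th row is $(\mathbf{1} - 2\boldsymbol{w}_i)^\top$, and let $\boldsymbol{c} \in \mathbb{R}^m$ have entries $c_i = n\epsilon_i - \boldsymbol{w}_i^\top \mathbf{1}$ (so that $\boldsymbol{A}\boldsymbol{y} = \boldsymbol{c}$). Then for any $\tilde{\boldsymbol{y}} \in [0,1]^n$ with $\boldsymbol{A}\tilde{\boldsymbol{y}} = \boldsymbol{c}$, $$\|\tilde{\boldsymbol{y}} - (\mathbf{1} - \boldsymbol{y})\| \ge n \,\|\boldsymbol{A}^+ (\mathbf{1} - 2\boldsymbol{\epsilon})\|,$$ where $\|\cdot\|$ is the Euclidean norm and $\boldsymbol{A}^+$ is the Moore–Penrose pseudoinverse of $\boldsymbol{A}$.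
   Context: Setting: binary classification with $n$ unlabeled examples and $m$ weak supervision signals. $\mathbf{1}$ denotes the all-ones vector of the appropriate dimension ($\mathbf{1} \in \mathbb{R}^n$ in $\boldsymbol{w}_i^\top\mathbf{1}$, $\mathbf{1}-\boldsymbol{y}$, and $\mathbf{1} - 2\boldsymbol{w}_i$; $\mathbf{1} \in \mathbb{R}^m$ in $\mathbf{1} - 2\boldsymbol{\epsilon}$). The weak signals may be soft (entries in $[0,1]$) or hard (entries in $\{0,1\}$). The error rate $\epsilon_i$ equals $\frac{1}{n}\left(\boldsymbol{w}_i^\top(\mathbf{1}-\boldsymbol{y}) + (\mathbf{1}-\boldsymbol{w}_i)^\top \boldsymbol{y}\right)$. *)

(* Defs.v *)
From HB Require Import structures.
From mathcomp Require Import all_boot all_order all_algebra.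
Set Implicit Arguments. Unset Strict Implicit. Unset Printing Implicit Defensive.
Import Order.TTheory GRing.Theory Num.Theory.
Local Open Scope ring_scope.

Definition ones (R : rcfType) (k : nat) : 'cV[R]_k := const_mx 1.

Definition enorm (R : rcfType) (k : nat) (v : 'cV[R]_k) : R :=
  Num.sqrt (\sum_(j < k) v j 0 ^+ 2).

Definition is_MP_pinv (R : rcfType) (m n : nat)
    (A : 'M[R]_(m, n)) (X : 'M[R]_(n, m)) : Prop :=
  [/\ A *m X *m A = A, X *m A *m X = X,
      (A *m X)^T = A *m X & (X *m A)^T = X *m A].

Definition err_rate (R : rcfType) (n : nat) (w y : 'cV[R]_n) : R :=
  n%:R^-1 * (((ones R n - 2%:R *: w)^T *m y) 0 0 + (w^T *m ones R n) 0 0).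

(* Main.v *)
Require Import Defs.
From HB Require Import structures.
From mathcomp Require Import all_boot all_order all_algebra.
From mathcomp Require Import ring lra.
Import Order.TTheory GRing.Theory Num.Theory.
Local Open Scope ring_scope.

Lemma sumsqE (R : rcfType) k (v : 'cV[R]_k) :
  (v^T *m v) 0 0 = \sum_(j < k) v j 0 ^+ 2.
Proof. rewrite !mxE; apply: eq_bigr => j _; rewrite !mxE expr2 //. Qed.

Lemma sumsq_ge0 (R : rcfType) k (v : 'cV[R]_k) : 0 <= (v^T *m v) 0 0.
Proof. rewrite sumsqE; apply: sumr_ge0 => j _; exact: sqr_ge0. Qed.

Lemma pyth_le (R : rcfType) k (u e : 'cV[R]_k) :
  u^T *m e = 0 -> (u^T *m u) 0 0 <= ((u + e)^T *m (u + e)) 0 0.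
Proof.
move=> h0.
have h1 : e^T *m u = 0 by rewrite -[e^T *m _]trmxK trmx_mul trmxK h0 trmx0.
rewrite (raddfD (@trmx R k 1)) mulmxDl !mulmxDr h0 h1 addr0 add0r [X in _ <= X]mxE.
rewrite lerDl; exact: sumsq_ge0.
Qed.

Lemma proj_contract (R : rcfType) k (P : 'M[R]_k) (d : 'cV[R]_k) :
  P^T = P -> P *m P = P -> ((P *m d)^T *m (P *m d)) 0 0 <= (d^T *m d) 0 0.
Proof.
move=> PT PP.
have hd : d = P *m d + (d - P *m d) by rewrite addrC subrK.
rewrite [in X in _ <= X]hd; apply: pyth_le.
by rewrite mulmxBr trmx_mul PT -!mulmxA [P *m (P *m d)]mulmxA PP subrr.
Qed.

Lemma enormZ (R : rcfType) k (a : R) (v : 'cV[R]_k) :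
  enorm (a *: v) = `|a| * enorm v.
Proof.
rewrite /enorm -sqrtr_sqr -sqrtrM ?sqr_ge0 // mulr_sumr; congr Num.sqrt.
by apply: eq_bigr => j _; rewrite mxE exprMn.
Qed.

Lemma enorm_le (R : rcfType) k (u v : 'cV[R]_k) :
  (u^T *m u) 0 0 <= (v^T *m v) 0 0 -> enorm u <= enorm v.
Proof. by rewrite /enorm -!sumsqE => h; apply: ler_wsqrtr. Qed.

Theorem theorem1 (R : rcfType) (n m : nat) (hn : (0 < n)%N) (hm : (0 < m)%N)
    (y : 'cV[R]_n) (hy : forall j, y j 0 = 0 \/ y j 0 = 1)
    (w : 'I_m -> 'cV[R]_n) (hw : forall i j, 0 <= w i j 0 <= 1)
    (A : 'M[R]_(m, n))
    (hA : A = \matrix_(i < m, j < n) (1 - 2%:R * w i j 0))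
    (eps : 'cV[R]_m) (heps : eps = \col_(i < m) err_rate (w i) y)
    (c : 'cV[R]_m)
    (hc : c = \col_(i < m) (n%:R * eps i 0 - ((w i)^T *m ones R n) 0 0))
    (Aplus : 'M[R]_(n, m)) (hAplus : is_MP_pinv A Aplus)
    (yt : 'cV[R]_n) (hyt : forall j, 0 <= yt j 0 <= 1)
    (hAyt : A *m yt = c) :
  n%:R * enorm (Aplus *m (ones R m - 2%:R *: eps))
    <= enorm (yt - (ones R n - y)).
Proof.
have hn0 : n%:R != 0 :> R by rewrite pnatr_eq0 -lt0n.
set d := yt - (ones R n - y).
set u := ones R m - 2%:R *: eps.
have hAd : A *m d = - (n%:R *: u).
  apply/matrixP => i k; rewrite ord1 {k}.
  rewrite /d mulmxBr hAyt.
  set S1 := \sum_(j < n) (1 - 2%:R * w i j 0) * y j 0.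
  set S2 := \sum_(j < n) w i j 0.
  have hS2 : ((w i)^T *m ones R n) 0 0 = S2.
    by rewrite mxE; apply: eq_bigr => j _; rewrite !mxE mulr1.
  have hE : n%:R * eps i 0 = S1 + S2.
    rewrite heps mxE /err_rate mulrA divff // mul1r hS2; congr (_ + _).
    by rewrite mxE; apply: eq_bigr => j _; rewrite !mxE.
  have hAo : (A *m (ones R n - y)) i 0 = n%:R - 2%:R * S2 - S1.
    rewrite mxE.
    have -> : \sum_j A i j * (ones R n - y) j 0
        = \sum_j (1 - 2%:R * w i j 0) - S1.
      rewrite -sumrB; apply: eq_bigr => j _.
      by rewrite hA !mxE mulrBr mulr1.
    by rewrite sumrB sumr_const card_ord -mulr_sumr.
  have -> : (c - A *m (ones R n - y)) i 0 = c i 0 - (A *m (ones R n - y)) i 0 by rewrite !mxE.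
  rewrite hAo hc mxE hS2 !mxE.
  move: hE; set E := eps i 0 => hE.
  rewrite hE mulrBr mulr1 mulrA (mulrC n%:R) -mulrA hE.
  ring.
have [_ hXAX _ hPT] := hAplus.
have hPP : Aplus *m A *m (Aplus *m A) = Aplus *m A.
  by rewrite mulmxA hXAX.
have -> : n%:R * enorm (Aplus *m u) = enorm (Aplus *m A *m d).
  rewrite -mulmxA hAd mulmxN -scalemxAr -scaleNr.
  by rewrite enormZ normrN ger0_norm.
by apply: enorm_le; apply: proj_contract.
Qed.
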